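(* Fix a finite set of docking points $Q=\{q_1,\dots,q_J\}\subset\partial D$ together with a cyclic order of visitation. If some gap angle of $Q$ is greater than $\pi$, then there is a $\mathbf W_d$-minimizing embedded monotone cycle in $D$ (rel $Q$) having winding number zero about the puncture. Conversely, if no gap angle is greater than $\pi$, then there is a $\mathbf W_d$-minimizing embedded cycle in $D$ (rel $Q$) of winding number $\pm 1$.
   Context: The Y-graph $\Upsilon$ has central vertex $v_0$, outer vertices $v_1,v_2,v_3$ and edges $e_i$ from $v_0$ to $v_i$ identified with $[0,1]$ ($0$ at $v_0$); write $x=|x|e_{\iota(x)}$ with edge index $\iota(x)$ (undefined at $v_0$ and then counted as different from every index). $\mathcal C=\{(x,y)\in\Upsilon\times\Upsilon:x\ne y\}$ and $D=\{(x,y)\in\mathcal C:\iota(x)\ne\iota(y)\}$. $D$ is the union of six punctured squares $\{(x,y):\iota(x)=i,\iota(y)=j\}\cong[0,1]^2\setminus\{(0,0)\}$, $i\ne j$, glued cyclically along the segments where $|x|=0$ or $|y|=0$; rescaling each square's quadrant angle by $2/3$ gives a homeomorphism of $D$ with the punctured closed unit disc $\{(r,\theta):0<r\le1\}$ in which the six branch segments $\{|x|=0\}\cup\{|y|=0\}$ (where an AGV occupies $v_0$) are the radial lines at angles $\theta\in\Theta=\{n\pi/3:n\in\mathbb Z\}$, the puncture corresponds to $(v_0,v_0)$, and $\partial D=\{|x|=1\text{ or }|y|=1\}$ is the unit circle. Given $Q=\{q_1,\dots,q_J\}\subset\partial D$ indexed in the order of visitation, the gap angles are $ga_j=\theta(q_{j+1})-\theta(q_j)\in(0,2\pi)$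 (indices mod $J$), differences taken with respect to the orientation of $\partial D$, so that $\sum_j ga_j=2\pi$. A cycle rel $Q$ is a closed curve in $D$ visiting the points of $Q$ in the given cyclic order; it is monotone if it visits $Q$ in the cyclic order of $\partial D$. The cost $\mathbf W_d(\gamma)$ of a curve is its number of intersections with the branch set $\{|x|=0\}\cup\{|y|=0\}$, i.e., the number of times an AGV occupies the central vertex; $\gamma$ is $\mathbf W_d$-minimizing if its cost is minimal among such cycles rel $Q$. Winding number is taken about the puncture; for embedded cycles it is $-1$, $0$ or $1$. *)

(* Defs.v *)
(* concrete reals R.  We work in the disc model of D described
   in the context: D = punctured closed unit disc in R^2, branch set = the six
   radial segments at angles n*pi/3, boundary = unit circle. *)
From Stdlib Require Import Reals Lra Lia ZArith List.
Open Scope R_scope.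

Definition pt := (R * R)%type.

Definition normp (p : pt) : R := sqrt (fst p * fst p + snd p * snd p).

Definition inD (p : pt) : Prop := 0 < normp p <= 1.

Definition on_branch (p : pt) : Prop :=
  0 < normp p /\
  exists n : Z, p = (normp p * cos (IZR n * PI / 3), normp p * sin (IZR n * PI / 3)).

Definition circ (a : R) : pt := (cos a, sin a).

(* counterclockwise angle from angle a to angle b, representative in (0, 2*pi]:
   ccw_gap a b = b - a + 2*pi*k  for the unique integer k making it lie in (0,2pi]. *)
Definition ccw_gap (a b : R) : R :=
  let x := (b - a) / (2 * PI) in 2 * PI * (x + IZR (up (- x))).

(* Docking points: J points q_j = circ (alpha j), j = 0..J-1, indexed in the
   order of visitation (indices mod J). *)
Definition gap_angle (J : nat) (alpha : nat -> R) (j : nat) : R :=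
  ccw_gap (alpha j) (alpha (S j mod J)%nat).

Definition distinct_points (J : nat) (alpha : nat -> R) : Prop :=
  forall i j, (i < J)%nat -> (j < J)%nat -> i <> j -> circ (alpha i) <> circ (alpha j).

Definition cont01 (f : R -> R) : Prop :=
  forall t, 0 <= t <= 1 -> forall eps, 0 < eps -> exists delta, 0 < delta /\
    forall s, 0 <= s <= 1 -> Rabs (s - t) < delta -> Rabs (f s - f t) < eps.

Definition closed_curve_in_D (g : R -> pt) : Prop :=
  cont01 (fun t => fst (g t)) /\ cont01 (fun t => snd (g t)) /\
  (forall t, 0 <= t <= 1 -> inD (g t)) /\ g 0 = g 1.

Definition cycle_rel (J : nat) (alpha : nat -> R) (g : R -> pt) : Prop :=
  closed_curve_in_D g /\
  exists tt : nat -> R,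
    (forall j, (j < J)%nat -> 0 <= tt j < 1 /\ g (tt j) = circ (alpha j)) /\
    (forall i j, (i < j < J)%nat -> tt i < tt j).

Definition embedded (g : R -> pt) : Prop :=
  forall s t, 0 <= s < 1 -> 0 <= t < 1 -> g s = g t -> s = t.

(* the visitation order q_0,...,q_{J-1} is the (counterclockwise) cyclic
   order of the boundary circle: the open ccw arc from q_j to q_{j+1}
   contains no other point of Q *)
Definition ccw_cyclic_order (J : nat) (alpha : nat -> R) : Prop :=
  forall i j, (i < J)%nat -> (j < J)%nat -> i <> j -> i <> (S j mod J)%nat ->
    ccw_gap (alpha j) (alpha (S j mod J)%nat) < ccw_gap (alpha j) (alpha i).

(* monotone cycle rel Q: visits Q in the cyclic order of the boundary *)
Definition monotone_cycle_rel (J : nat) (alpha : nat -> R) (g : R -> pt) : Prop :=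
  cycle_rel J alpha g /\ ccw_cyclic_order J alpha.

(* cost W_d: number of parameter times t in [0,1) at which g meets the branch
   set; has_cost g n means this number is finite and equal to n *)
Definition has_cost (g : R -> pt) (n : nat) : Prop :=
  exists l : list R, NoDup l /\ length l = n /\
    forall t, In t l <-> (0 <= t < 1 /\ on_branch (g t)).

(* W_d-minimizing among cycles rel Q (cycles of infinite cost never beat it) *)
Definition Wd_minimizing (J : nat) (alpha : nat -> R) (g : R -> pt) : Prop :=
  cycle_rel J alpha g /\
  exists n, has_cost g n /\
    forall g' m, cycle_rel J alpha g' -> has_cost g' m -> (n <= m)%nat.

Definition winding_number (g : R -> pt) (w : Z) : Prop :=
  exists th : R -> R, cont01 th /\
    (forall t, 0 <= t <= 1 -> g t = (normp (g t) * cos (th t), normp (g t) * sin (th t))) /\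
    th 1 - th 0 = 2 * PI * IZR w.

(* Main.v *)
Require Import Defs.
From Stdlib Require Import Reals Lra Lia ZArith List Classical.
Open Scope R_scope.

Lemma cos_2pik : forall x k, cos (x + 2*PI*IZR k) = cos x.
Proof.
  intros x k. destruct (Z.le_gt_cases 0 k) as [H|H].
  - rewrite <- (Z2Nat.id k) by lia. rewrite <- INR_IZR_INZ.
    replace (x + 2*PI*INR (Z.to_nat k)) with (x + 2*INR (Z.to_nat k)*PI) by ring.
    apply cos_period.
  - replace k with (- Z.of_nat (Z.to_nat (-k)))%Z by lia.
    rewrite opp_IZR, <- INR_IZR_INZ.
    set (n := Z.to_nat (-k)).
    rewrite <- (cos_period (x + 2*PI*(- INR n)) n). f_equal. ring.
Qed.

Lemma sin_2pik : forall x k, sin (x + 2*PI*IZR k) = sin x.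
Proof.
  intros x k. destruct (Z.le_gt_cases 0 k) as [H|H].
  - rewrite <- (Z2Nat.id k) by lia. rewrite <- INR_IZR_INZ.
    replace (x + 2*PI*INR (Z.to_nat k)) with (x + 2*INR (Z.to_nat k)*PI) by ring.
    apply sin_period.
  - replace k with (- Z.of_nat (Z.to_nat (-k)))%Z by lia.
    rewrite opp_IZR, <- INR_IZR_INZ.
    set (n := Z.to_nat (-k)).
    rewrite <- (sin_period (x + 2*PI*(- INR n)) n). f_equal. ring.
Qed.

Lemma circ_2pik : forall x k, circ (x + 2*PI*IZR k) = circ x.
Proof. intros. unfold circ. rewrite cos_2pik, sin_2pik. reflexivity. Qed.

Lemma circ_eq_angle : forall a b, cos a = cos b -> sin a = sin b ->
  exists k, a = b + 2*PI*IZR k.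
Proof.
  intros a b Hc Hs.
  assert (H1 : sin (a - b) = 0).
  { rewrite sin_minus, Hc, Hs. ring. }
  assert (H2 : cos (a - b) = 1).
  { rewrite cos_minus, Hc, Hs. pose proof (sin2_cos2 b) as E. unfold Rsqr in E. lra. }
  destruct (sin_eq_0_0 _ H1) as [k Hk].
  destruct (Z.Even_or_Odd k) as [[q Hq]|[q Hq]]; subst k.
  - exists q. rewrite mult_IZR in Hk. lra.
  - exfalso. rewrite Hk in H2. rewrite plus_IZR, mult_IZR in H2.
    replace ((2 * IZR q + 1) * PI) with (PI + 2*PI*IZR q) in H2 by ring.
    rewrite cos_2pik, cos_PI in H2. lra.
Qed.

Lemma normp_polar : forall r a, 0 <= r -> normp (r * cos a, r * sin a) = r.
Proof.
  intros r a Hr. unfold normp; simpl.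
  pose proof (sin2_cos2 a) as E. unfold Rsqr in E.
  replace (r * cos a * (r * cos a) + r * sin a * (r * sin a)) with (r*r)
    by (transitivity (r*r*(sin a*sin a + cos a*cos a)); [rewrite E; ring| ring]).
  apply sqrt_square; lra.
Qed.

Definition mult3 (a : R) : Prop := exists n : Z, a = IZR n * PI / 3.

Lemma on_branch_polar : forall r a, 0 < r ->
  (on_branch (r * cos a, r * sin a) <-> mult3 a).
Proof.
  intros r a Hr. split.
  - intros [_ [n Hn]]. rewrite normp_polar in Hn by lra.
    injection Hn as H1 H2.
    apply Rmult_eq_reg_l in H1; [|lra]. apply Rmult_eq_reg_l in H2; [|lra].
    destruct (circ_eq_angle _ _ H1 H2) as [k Hk].
    exists (n + 6*k)%Z. rewrite Hk, plus_IZR, mult_IZR. field.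
  - intros [n Hn]. split.
    + rewrite normp_polar; lra.
    + exists n. rewrite normp_polar by lra. rewrite Hn. reflexivity.
Qed.

Lemma Z_small : forall z, -1 < IZR z < 1 -> z = 0%Z.
Proof.
  intros z [H1 H2]. apply lt_IZR in H2. replace (-1) with (IZR (-1)) in H1 by reflexivity.
  apply lt_IZR in H1. lia.
Qed.

Lemma ccw_gap_range : forall a b, 0 < ccw_gap a b <= 2*PI.
Proof.
  intros a b. unfold ccw_gap. set (x := (b - a) / (2*PI)).
  destruct (archimed (-x)) as [H1 H2]. pose proof PI_RGT_0.
  split; apply Rmult_lt_0_compat || idtac.
  - lra.
  - lra.
  - replace (2*PI) with (2*PI*1) at 2 by ring. apply Rmult_le_compat_l; lra.
Qed.

Lemma ccw_gap_cong : forall a b, exists k, ccw_gap a b = b - a + 2*PI*IZR k.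
Proof.
  intros a b. unfold ccw_gap. exists (up (- ((b - a) / (2*PI)))).
  pose proof PI_RGT_0. field. lra.
Qed.

Lemma ccw_gap_unique : forall a b x k, 0 < x <= 2*PI -> x = b - a + 2*PI*IZR k ->
  ccw_gap a b = x.
Proof.
  intros a b x k Hx Hk. destruct (ccw_gap_cong a b) as [k' Hk'].
  pose proof (ccw_gap_range a b). pose proof PI_RGT_0.
  assert (E : (k' - k = 0)%Z).
  { apply Z_small. rewrite minus_IZR.
    assert (ccw_gap a b - x = 2*PI*(IZR k' - IZR k)) by lra.
    split.
    - apply Rmult_lt_reg_l with (2*PI); lra.
    - apply Rmult_lt_reg_l with (2*PI); lra. }
  assert (k' = k) by lia. subst. lra.
Qed.

Fixpoint beta (J : nat) (alpha : nat -> R) (j : nat) : R :=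
  match j with
  | O => alpha O
  | S j' => beta J alpha j' + gap_angle J alpha j'
  end.

Lemma beta_S : forall J alpha n,
  beta J alpha (S n) = alpha O + sum_f_R0 (gap_angle J alpha) n.
Proof.
  intros J alpha n. induction n.
  - simpl. ring.
  - change (beta J alpha (S (S n))) with (beta J alpha (S n) + gap_angle J alpha (S n)).
    rewrite IHn. simpl. ring.
Qed.

Lemma beta_J : forall J alpha, (1 <= J)%nat ->
  sum_f_R0 (gap_angle J alpha) (J - 1) = 2 * PI ->
  beta J alpha J = alpha O + 2*PI.
Proof.
  intros J alpha HJ Hs. replace J with (S (J-1)) at 2 by lia.
  rewrite beta_S, Hs. reflexivity.
Qed.

Lemma gap_pos : forall J alpha j, 0 < gap_angle J alpha j.
Proof. intros. unfold gap_angle. apply ccw_gap_range. Qed.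

Lemma gap_le : forall J alpha j, gap_angle J alpha j <= 2*PI.
Proof. intros. unfold gap_angle. apply ccw_gap_range. Qed.

Lemma beta_step : forall J alpha j, beta J alpha (S j) = beta J alpha j + gap_angle J alpha j.
Proof. reflexivity. Qed.

Lemma beta_incr : forall J alpha i j, (i < j)%nat -> beta J alpha i < beta J alpha j.
Proof.
  intros J alpha i j H. induction H.
  - rewrite beta_step. pose proof (gap_pos J alpha i). lra.
  - rewrite beta_step. pose proof (gap_pos J alpha m). lra.
Qed.

Lemma beta_le : forall J alpha i j, (i <= j)%nat -> beta J alpha i <= beta J alpha j.
Proof.
  intros. destruct (Nat.eq_dec i j). subst; lra. left; apply beta_incr; lia.
Qed.

Lemma beta_cong : forall J alpha j, (j < J)%nat ->
  exists k, beta J alpha j = alpha j + 2*PI*IZR k.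
Proof.
  intros J alpha j. induction j; intros Hj.
  - exists 0%Z. simpl. ring.
  - destruct IHj as [k Hk]; [lia|].
    rewrite beta_step, Hk. unfold gap_angle.
    rewrite Nat.mod_small by lia.
    destruct (ccw_gap_cong (alpha j) (alpha (S j))) as [k' Hk'].
    rewrite Hk'. exists (k + k')%Z. rewrite plus_IZR. ring.
Qed.

Lemma beta_circ : forall J alpha j, (j < J)%nat -> circ (beta J alpha j) = circ (alpha j).
Proof.
  intros. destruct (beta_cong J alpha j H) as [k Hk]. rewrite Hk. apply circ_2pik.
Qed.

Lemma gap_lt : forall J alpha j, (2 <= J)%nat -> distinct_points J alpha -> (j < J)%nat ->
  gap_angle J alpha j < 2*PI.
Proof.
  intros J alpha j HJ Hd Hj. destruct (gap_le J alpha j) as [H|H]; [exact H|].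
  exfalso. unfold gap_angle in H.
  destruct (ccw_gap_cong (alpha j) (alpha (S j mod J))) as [k Hk].
  assert (E : alpha (S j mod J) = alpha j + 2*PI*IZR (1 - k)).
  { rewrite minus_IZR. simpl (IZR 1). lra. }
  apply (Hd (S j mod J)%nat j).
  - apply Nat.mod_upper_bound; lia.
  - exact Hj.
  - destruct (Nat.eq_dec (S j) J).
    + subst. rewrite Nat.mod_same by lia. lia.
    + rewrite Nat.mod_small by lia. lia.
  - rewrite E. apply circ_2pik.
Qed.

Lemma ccw_gap_beta_gt : forall J alpha i j, (1 <= J)%nat ->
  sum_f_R0 (gap_angle J alpha) (J - 1) = 2 * PI -> (j < i < J)%nat ->
  ccw_gap (alpha j) (alpha i) = beta J alpha i - beta J alpha j.
Proof.
  intros J alpha i j HJ Hs Hij.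
  destruct (beta_cong J alpha i ltac:(lia)) as [ki Hki].
  destruct (beta_cong J alpha j ltac:(lia)) as [kj Hkj].
  apply ccw_gap_unique with (k := (ki - kj)%Z).
  - pose proof (beta_incr J alpha j i ltac:(lia)).
    pose proof (beta_incr J alpha i J ltac:(lia)).
    pose proof (beta_le J alpha 0 j ltac:(lia)).
    pose proof (beta_J J alpha HJ Hs). simpl beta in *. lra.
  - rewrite minus_IZR. lra.
Qed.

Lemma ccw_gap_beta_lt : forall J alpha i j, (1 <= J)%nat ->
  sum_f_R0 (gap_angle J alpha) (J - 1) = 2 * PI -> (i < j < J)%nat ->
  ccw_gap (alpha j) (alpha i) = beta J alpha i + 2*PI - beta J alpha j.
Proof.
  intros J alpha i j HJ Hs Hij.
  destruct (beta_cong J alpha i ltac:(lia)) as [ki Hki].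
  destruct (beta_cong J alpha j ltac:(lia)) as [kj Hkj].
  apply ccw_gap_unique with (k := (ki - kj + 1)%Z).
  - pose proof (beta_incr J alpha i j ltac:(lia)).
    pose proof (beta_incr J alpha j J ltac:(lia)).
    pose proof (beta_le J alpha 0 i ltac:(lia)).
    pose proof (beta_J J alpha HJ Hs). simpl beta in *. lra.
  - rewrite plus_IZR, minus_IZR. simpl (IZR 1). lra.
Qed.

Lemma cyclic_order : forall J alpha, (1 <= J)%nat ->
  sum_f_R0 (gap_angle J alpha) (J - 1) = 2 * PI -> ccw_cyclic_order J alpha.
Proof.
  intros J alpha HJ Hs i j Hi Hj Hij Hij1.
  change (ccw_gap (alpha j) (alpha (S j mod J))) with (gap_angle J alpha j).
  replace (gap_angle J alpha j) with (beta J alpha (S j) - beta J alpha j)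
    by (rewrite beta_step; ring).
  pose proof (beta_J J alpha HJ Hs) as BJ.
  destruct (Nat.lt_ge_cases j i).
  - rewrite (ccw_gap_beta_gt J alpha i j) by (auto; lia).
    assert (S j <> J).
    { intro E. lia. }
    rewrite Nat.mod_small in Hij1 by lia.
    pose proof (beta_incr J alpha (S j) i ltac:(lia)). lra.
  - rewrite (ccw_gap_beta_lt J alpha i j) by (auto; lia).
    destruct (Nat.eq_dec (S j) J) as [E|E].
    + rewrite E, Nat.mod_same in Hij1 by lia.
      rewrite E, BJ. pose proof (beta_incr J alpha 0 i ltac:(lia)). simpl beta in *. lra.
    + pose proof (beta_incr J alpha (S j) J ltac:(lia)).
      pose proof (beta_le J alpha 0 i ltac:(lia)). simpl beta in *. lra.
Qed.

Definition clamp t := Rmax 0 (Rmin 1 t).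

Lemma clamp_id : forall t, 0 <= t <= 1 -> clamp t = t.
Proof. intros t H. unfold clamp, Rmax, Rmin. repeat destruct Rle_dec; lra. Qed.

Lemma clamp_range : forall t, 0 <= clamp t <= 1.
Proof. intros t. unfold clamp, Rmax, Rmin. repeat destruct Rle_dec; lra. Qed.

Lemma clamp_lip : forall s t, Rabs (clamp s - clamp t) <= Rabs (s - t).
Proof.
  intros s t. unfold clamp, Rmax, Rmin, Rabs.
  repeat (destruct Rle_dec || destruct Rcase_abs); lra.
Qed.

Lemma cont01_ext : forall f, cont01 f -> continuity (fun t => f (clamp t)).
Proof.
  intros f Hf x. unfold continuity_pt, continue_in, limit1_in, limit_in.
  intros eps Heps. destruct (Hf (clamp x) (clamp_range x) eps Heps) as [d [Hd H]].
  exists d. split; auto. intros y [_ Hy]. simpl in *. unfold R_dist in *.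
  apply H. apply clamp_range.
  eapply Rle_lt_trans; [apply clamp_lip| exact Hy].
Qed.

Lemma continuity_cont01 : forall f, continuity f -> cont01 f.
Proof.
  intros f Hc t Ht eps Heps.
  destruct (Hc t eps Heps) as [alp [Halp H]]. exists alp; split; auto.
  intros s Hs Hst. destruct (Req_dec s t).
  - subst. rewrite Rminus_diag, Rabs_R0. lra.
  - apply (H s). split.
    + split; [exact I | auto].
    + simpl. unfold R_dist. exact Hst.
Qed.

Lemma IVT_strict : forall F a b, continuity F -> a < b -> F a * F b < 0 ->
  exists z, a < z < b /\ F z = 0.
Proof.
  intros F a b Hc Hab Hs.
  destruct (IVT_cor F a b Hc ltac:(lra) ltac:(lra)) as [z [Hz Fz]].
  exists z. split; auto. split.
  - destruct (Req_dec a z); [subst; rewrite Fz in Hs; lra | lra].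
  - destruct (Req_dec z b); [subst; rewrite Fz in Hs; lra | lra].
Qed.

Definition cr (d : R) (p : pt) : R := cos d * snd p - sin d * fst p.

Lemma cr_circ : forall d a, cr d (circ a) = sin (a - d).
Proof. intros. unfold cr, circ; simpl. rewrite sin_minus. ring. Qed.

Lemma normp_0 : normp (0,0) = 0.
Proof. unfold normp; simpl. replace (0*0+0*0) with 0 by ring. apply sqrt_0. Qed.

Lemma cr_zero_branch : forall d p, mult3 d -> inD p -> cr d p = 0 -> on_branch p.
Proof.
  intros d [x y] [n Hn] HD Hcr. unfold cr in Hcr; simpl in Hcr.
  pose proof (sin2_cos2 d) as E. unfold Rsqr in E.
  set (l := cos d * x + sin d * y).
  assert (Ex : x = l * cos d).
  { unfold l. transitivity (x * (sin d * sin d + cos d * cos d)); [rewrite E; ring|].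
    replace (x * (sin d * sin d + cos d * cos d)) with
      (sin d * (sin d * x) + cos d * cos d * x) by ring.
    replace (sin d * x) with (cos d * y) by lra. ring. }
  assert (Ey : y = l * sin d).
  { unfold l. transitivity (y * (sin d * sin d + cos d * cos d)); [rewrite E; ring|].
    replace (y * (sin d * sin d + cos d * cos d)) with
      (cos d * (cos d * y) + sin d * sin d * y) by ring.
    replace (cos d * y) with (sin d * x) by lra. ring. }
  destruct (Rtotal_order l 0) as [Hl|[Hl|Hl]].
  - assert (P : (x, y) = ((-l) * cos (d + PI), (-l) * sin (d + PI))).
    { rewrite neg_cos, neg_sin. f_equal; lra. }
    rewrite P. apply on_branch_polar; [lra|]. exists (n + 3)%Z.
    rewrite plus_IZR, Hn. simpl (IZR 3). field.
  - exfalso. destruct HD as [HD _]. rewrite Ex, Ey, Hl in HD.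
    replace (0 * cos d) with 0 in HD by ring. replace (0 * sin d) with 0 in HD by ring.
    rewrite normp_0 in HD. lra.
  - assert (P : (x, y) = (l * cos d, l * sin d)). { f_equal; lra. }
    rewrite P. apply on_branch_polar; [lra|]. exists n. exact Hn.
Qed.

Lemma cr_two_zero : forall d e p, inD p -> cr d p = 0 -> cr e p = 0 -> sin (d - e) <> 0 -> False.
Proof.
  intros d e [x y] HD H1 H2 Hs. unfold cr in *; simpl in *.
  assert (Hx : x * sin (d - e) = 0).
  { rewrite sin_minus.
    replace (x * (sin d * cos e - cos d * sin e)) with
      (cos e * (sin d * x) - cos d * (sin e * x)) by ring.
    replace (sin d * x) with (cos d * y) by lra.
    replace (sin e * x) with (cos e * y) by lra. ring. }
  assert (Hy : y * sin (d - e) = 0).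
  { rewrite sin_minus.
    replace (y * (sin d * cos e - cos d * sin e)) with
      (sin d * (cos e * y) - sin e * (cos d * y)) by ring.
    replace (cos e * y) with (sin e * x) by lra.
    replace (cos d * y) with (sin d * x) by lra. ring. }
  apply Rmult_integral in Hx. apply Rmult_integral in Hy.
  destruct Hx as [Hx|Hx]; [|contradiction]. destruct Hy as [Hy|Hy]; [|contradiction].
  subst. destruct HD as [HD _]. rewrite normp_0 in HD. lra.
Qed.

Definition cost_wit (g : R -> pt) (d : R) (c : nat) : Prop :=
  exists l, NoDup l /\ length l = c /\ forall t, In t l -> 0 <= t < 1 /\ cr d (g t) = 0.

Lemma LB : forall g n, closed_curve_in_D g -> has_cost g n ->
  forall ds (cs : R -> nat), NoDup ds ->
  (forall d, In d ds -> mult3 d) ->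
  (forall d e, In d ds -> In e ds -> d <> e -> sin (d - e) <> 0) ->
  (forall d, In d ds -> cost_wit g d (cs d)) ->
  (list_sum (map cs ds) <= n)%nat.
Proof.
  intros g n Hg [cl [Hnd [Hlen Hcl]]] ds cs Hds Hm Hp Hw.
  assert (HL : exists L, NoDup L /\ length L = list_sum (map cs ds) /\
            forall t, In t L -> 0 <= t < 1 /\ exists d, In d ds /\ cr d (g t) = 0).
  { clear Hlen. induction ds as [|d ds IH].
    - exists nil. simpl. split; [constructor|]. split; auto. intros t [].
    - inversion Hds; subst.
      destruct IH as [L [HL1 [HL2 HL3]]]; auto.
      + intros; apply Hm; simpl; auto.
      + intros; apply Hp; simpl; auto.
      + intros; apply Hw; simpl; auto.
      + destruct (Hw d (or_introl eq_refl)) as [l [Hl1 [Hl2 Hl3]]].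
        exists (l ++ L). split; [|split].
        * apply NoDup_app; auto. intros t Ht HtL.
          destruct (Hl3 t Ht) as [Ht01 Hc1].
          destruct (HL3 t HtL) as [_ [e [He Hc2]]].
          destruct Hg as [_ [_ [HD _]]].
          apply (cr_two_zero d e (g t)); auto. apply HD; lra.
          apply Hp; simpl; auto. intro; subst; contradiction.
        * rewrite length_app, Hl2, HL2. reflexivity.
        * intros t Ht. apply in_app_or in Ht. destruct Ht as [Ht|Ht].
          -- destruct (Hl3 t Ht). split; auto. exists d; simpl; auto.
          -- destruct (HL3 t Ht) as [A [e [B C]]]. split; auto. exists e; simpl; auto. }
  destruct HL as [L [HL1 [HL2 HL3]]]. rewrite <- HL2, <- Hlen.
  apply NoDup_incl_length; auto. intros t Ht. apply Hcl.
  destruct (HL3 t Ht) as [Ht01 [e [He Hc]]]. split; auto.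
  destruct Hg as [_ [_ [HD _]]].
  apply (cr_zero_branch e); auto. apply HD; lra.
Qed.

Lemma W1 : forall g d a, 0 <= a < 1 -> cr d (g a) = 0 -> cost_wit g d 1.
Proof.
  intros. exists (a :: nil). split; [constructor; [intros []|constructor]|].
  split; auto. intros t [<-|[]]. auto.
Qed.

Lemma W2 : forall g d a b, 0 <= a < 1 -> 0 <= b < 1 -> a <> b ->
  cr d (g a) = 0 -> cr d (g b) = 0 -> cost_wit g d 2.
Proof.
  intros. exists (a :: b :: nil). split.
  - constructor. intros [E|[]]; auto. constructor; [intros []|constructor].
  - split; auto. intros t [<-|[<-|[]]]; auto.
Qed.

Lemma W2' : forall g d a b, closed_curve_in_D g -> 0 <= a < 1 -> 0 <= b < 1 ->
  cr d (g a) > 0 -> cr d (g b) < 0 -> cost_wit g d 2.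
Proof.
  intros g d a b [Hx [Hy [HD Hc]]] Ha Hb Hpa Hpb.
  set (F := fun t => cos d * snd (g (clamp t)) - sin d * fst (g (clamp t))).
  assert (HF : continuity F).
  { unfold F. apply continuity_minus; apply continuity_scal.
    - apply (cont01_ext (fun t => snd (g t))). exact Hy.
    - apply (cont01_ext (fun t => fst (g t))). exact Hx. }
  assert (EF : forall t, 0 <= t <= 1 -> F t = cr d (g t)).
  { intros t Ht. unfold F, cr. rewrite clamp_id; auto. }
  assert (F1 : F 1 = F 0).
  { rewrite !EF by lra. rewrite Hc. reflexivity. }
  set (lo := Rmin a b). set (hi := Rmax a b).
  assert (Hlh : lo < hi /\ F lo * F hi < 0 /\ 0 <= lo /\ hi < 1).
  { unfold lo, hi, Rmin, Rmax. destruct Rle_dec.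
    - destruct (Req_dec a b). { subst. lra. }
      rewrite !EF by lra. split; [lra|]. split; [|lra].
      nra.
    - rewrite !EF by lra. split; [lra|]. split; [|lra].
      nra. }
  destruct Hlh as [Hlh [Hs [Hlo Hhi]]].
  destruct (IVT_strict F lo hi HF Hlh Hs) as [z1 [Hz1 Fz1]].
  assert (Z2 : exists z2, ((0 <= z2 < lo) \/ (hi < z2 < 1)) /\ F z2 = 0).
  { destruct (Rtotal_order (F 0 * F lo) 0) as [H|[H|H]].
    - destruct (Req_dec lo 0). { subst. rewrite H0 in H. nra. }
      destruct (IVT_strict F 0 lo HF ltac:(lra) H) as [z [Hz Fz]].
      exists z. split; [left; lra | exact Fz].
    - apply Rmult_integral in H. destruct H as [H|H].
      + destruct (Req_dec lo 0).
        * exfalso. rewrite H0 in Hs. rewrite H in Hs. lra.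
        * exists 0. split; [left; lra | exact H].
      + exfalso. rewrite H in Hs. lra.
    - assert (F hi * F 1 < 0).
      { rewrite F1. assert (F lo * F lo > 0).
        { assert (F lo <> 0). { intro E. rewrite E in Hs. lra. } nra. }
        nra. }
      destruct (IVT_strict F hi 1 HF ltac:(lra) H0) as [z [Hz Fz]].
      exists z. split; [right; lra | exact Fz]. }
  destruct Z2 as [z2 [Hz2 Fz2]].
  apply (W2 g d z1 z2).
  - lra.
  - lra.
  - lra.
  - rewrite <- EF by lra. auto.
  - rewrite <- EF by lra. auto.
Qed.

Definition polar (rho psi : R -> R) : R -> pt :=
  fun t => (rho t * cos (psi t), rho t * sin (psi t)).

Lemma cont_mult : forall f g, continuity f -> continuity g -> continuity (fun t => f t * g t).
Proof. intros. apply (continuity_mult f g); auto. Qed.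
Lemma cont_comp : forall f g, continuity f -> continuity g -> continuity (fun t => g (f t)).
Proof. intros. apply (continuity_comp f g); auto. Qed.
Lemma cont_plus : forall f g, continuity f -> continuity g -> continuity (fun t => f t + g t).
Proof. intros. apply (continuity_plus f g); auto. Qed.
Lemma cont_minus : forall f g, continuity f -> continuity g -> continuity (fun t => f t - g t).
Proof. intros. apply (continuity_minus f g); auto. Qed.
Lemma cont_const : forall c, continuity (fun _ => c).
Proof. intros. apply continuity_const. intros x y; reflexivity. Qed.
Lemma cont_id : continuity (fun t => t).
Proof. apply derivable_continuous, derivable_id. Qed.

Lemma polar_closed : forall rho psi, continuity rho -> continuity psi ->
  (forall t, 0 <= t <= 1 -> 0 < rho t <= 1) -> polar rho psi 0 = polar rho psi 1 ->
  closed_curve_in_D (polar rho psi).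
Proof.
  intros rho psi Hr Hp Hb Hc. split; [|split; [|split]]; auto.
  - apply continuity_cont01. unfold polar; simpl.
    apply cont_mult; auto. apply cont_comp; auto. apply continuity_cos.
  - apply continuity_cont01. unfold polar; simpl.
    apply cont_mult; auto. apply cont_comp; auto. apply continuity_sin.
  - intros t Ht. unfold inD, polar. rewrite normp_polar; [|specialize (Hb t Ht); lra].
    apply Hb; auto.
Qed.

Lemma polar_winding : forall rho psi w, continuity psi ->
  (forall t, 0 <= t <= 1 -> 0 < rho t) -> psi 1 - psi 0 = 2 * PI * IZR w ->
  winding_number (polar rho psi) w.
Proof.
  intros rho psi w Hp Hr Hw. exists psi. split; [apply continuity_cont01; auto|].
  split; auto. intros t Ht. unfold polar. rewrite normp_polar; [reflexivity|].
  specialize (Hr t Ht); lra.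
Qed.

Lemma polar_embedded : forall rho psi,
  (forall t, 0 <= t < 1 -> 0 < rho t) ->
  (forall s t, 0 <= s < 1 -> 0 <= t < 1 -> rho s = rho t -> psi s = psi t -> s = t) ->
  (forall s t, 0 <= s < 1 -> 0 <= t < 1 -> Rabs (psi s - psi t) < 2 * PI) ->
  embedded (polar rho psi).
Proof.
  intros rho psi Hr Hi Hd s t Hs Ht E.
  assert (Er : rho s = rho t).
  { rewrite <- (normp_polar (rho s) (psi s)), <- (normp_polar (rho t) (psi t)).
    unfold polar in E. rewrite E. reflexivity.
    specialize (Hr t Ht); lra. specialize (Hr s Hs); lra. }
  unfold polar in E. injection E as E1 E2. rewrite Er in E1, E2.
  pose proof (Hr t Ht).
  apply Rmult_eq_reg_l in E1; [|lra]. apply Rmult_eq_reg_l in E2; [|lra].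
  destruct (circ_eq_angle _ _ E1 E2) as [k Hk].
  assert (k = 0%Z).
  { apply Z_small. specialize (Hd s t Hs Ht). rewrite Hk in Hd.
    replace (psi t + 2 * PI * IZR k - psi t) with (2*PI*IZR k) in Hd by ring.
    pose proof PI_RGT_0.
    rewrite Rabs_mult, (Rabs_right (2*PI)) in Hd by lra.
    assert (Rabs (IZR k) < 1) by (apply Rmult_lt_reg_l with (2*PI); lra).
    destruct (Rabs_def2 _ _ H1); lra. }
  subst. apply Hi; auto. simpl in Hk. lra.
Qed.

Lemma polar_cost : forall rho psi l,
  (forall t, 0 <= t < 1 -> 0 < rho t) -> NoDup l ->
  (forall t, In t l <-> (0 <= t < 1 /\ mult3 (psi t))) ->
  has_cost (polar rho psi) (length l).
Proof.
  intros rho psi l Hr Hn Hl. exists l. split; auto. split; auto.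
  intros t. rewrite Hl. unfold polar. split.
  - intros [Ht Hm]. split; auto. apply on_branch_polar; auto.
  - intros [Ht Hb]. split; auto. apply on_branch_polar in Hb; auto.
Qed.

Lemma pi3_le : forall u v, u * PI / 3 <= v * PI / 3 <-> u <= v.
Proof.
  intros. pose proof PI_RGT_0. split; intros.
  - apply Rmult_le_reg_r with (PI/3). lra. unfold Rdiv in *. lra.
  - apply Rmult_le_compat_r with (r := PI/3) in H0; [|lra]. unfold Rdiv in *. lra.
Qed.

Lemma pi3_lt : forall u v, u * PI / 3 < v * PI / 3 <-> u < v.
Proof.
  intros. pose proof PI_RGT_0. split; intros.
  - apply Rmult_lt_reg_r with (PI/3). lra. unfold Rdiv in *. lra.
  - apply Rmult_lt_compat_r with (r := PI/3) in H0; [|lra]. unfold Rdiv in *. lra.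
Qed.

Lemma ceil_ex : forall y, exists n0 : Z, y <= IZR n0 < y + 1.
Proof.
  intros y. destruct (archimed (-y)) as [H1 H2]. exists (1 - up (-y))%Z.
  rewrite minus_IZR. simpl (IZR 1). lra.
Qed.

Lemma Zdiff_range : forall a b (lo hi : Z), IZR lo - 1 < IZR a - IZR b < IZR hi + 1 ->
  (lo <= a - b <= hi)%Z.
Proof.
  intros a b lo hi [H1 H2].
  assert (IZR (lo - 1) < IZR (a - b)) by (rewrite !minus_IZR; simpl; lra).
  assert (IZR (a - b) < IZR (hi + 1)) by (rewrite minus_IZR, plus_IZR; simpl; lra).
  apply lt_IZR in H. apply lt_IZR in H0. lia.
Qed.

Lemma cand2 : forall J alpha, (2 <= J)%nat ->
  sum_f_R0 (gap_angle J alpha) (J - 1) = 2 * PI ->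
  exists g, closed_curve_in_D g /\ cycle_rel J alpha g /\ embedded g /\
    winding_number g 1%Z /\ has_cost g 6.
Proof.
  intros J alpha HJ Hs. pose proof PI_RGT_0 as Hpi.
  set (b0 := alpha 0%nat).
  set (rho := fun _ : R => 1). set (psi := fun t => b0 + 2 * PI * t).
  assert (Cp : continuity psi).
  { unfold psi. apply cont_plus. apply cont_const. apply cont_mult. apply cont_const. apply cont_id. }
  assert (Hcl : closed_curve_in_D (polar rho psi)).
  { apply polar_closed; auto. apply cont_const. unfold rho; intros; lra.
    unfold polar, rho, psi. rewrite (cos_2pik b0 1), (sin_2pik b0 1).
    replace (b0 + 2*PI*0) with b0 by ring. reflexivity. }
  exists (polar rho psi). split; auto. split; [|split; [|split]].
  - split; auto. exists (fun j => (beta J alpha j - b0) / (2*PI)). split.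
    + intros j Hj. pose proof (beta_le J alpha 0 j ltac:(lia)).
      pose proof (beta_incr J alpha j J ltac:(lia)).
      pose proof (beta_J J alpha ltac:(lia) Hs). simpl beta in *. split.
      * split. apply Rmult_le_pos. unfold b0; lra. left; apply Rinv_0_lt_compat; lra.
        apply Rmult_lt_reg_r with (2*PI); [lra|]. unfold Rdiv.
        rewrite Rmult_assoc, Rinv_l by lra. unfold b0 in *. lra.
      * unfold polar, rho, psi. rewrite <- (beta_circ J alpha j Hj). unfold circ.
        replace (b0 + 2 * PI * ((beta J alpha j - b0) / (2 * PI))) with (beta J alpha j)
          by (field; lra). f_equal; ring.
    + intros i j Hij. apply Rmult_lt_compat_r. apply Rinv_0_lt_compat; lra.
      pose proof (beta_incr J alpha i j ltac:(lia)). lra.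
  - apply polar_embedded.
    + unfold rho; intros; lra.
    + intros s t _ _ _ E. unfold psi in E. apply Rmult_eq_reg_l with (2*PI); lra.
    + intros s t Hs' Ht'. unfold psi. replace (b0 + 2*PI*s - (b0 + 2*PI*t)) with (2*PI*(s-t)) by ring.
      rewrite Rabs_mult, (Rabs_right (2*PI)) by lra.
      rewrite <- (Rmult_1_r (2*PI)) at 2. apply Rmult_lt_compat_l; [lra|].
      apply Rabs_def1; lra.
  - apply polar_winding; auto. unfold rho; intros; lra. unfold psi. simpl. ring.
  - set (y := 3 * b0 / PI). assert (Eb : b0 = y * PI / 3) by (unfold y; field; lra).
    destruct (ceil_ex y) as [n0 Hn0].
    set (l := map (fun i : nat => (IZR (n0 + Z.of_nat i) * PI / 3 - b0) / (2 * PI)) (seq 0 6)).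
    replace 6%nat with (length l) by (unfold l; rewrite length_map, length_seq; reflexivity).
    apply polar_cost.
    + unfold rho; intros; lra.
    + unfold l. apply NoDup_map_NoDup_ForallPairs; [|apply seq_NoDup].
      intros i j _ _ E. apply Rmult_eq_reg_r in E; [|apply Rinv_neq_0_compat; lra].
      assert (E' : IZR (n0 + Z.of_nat i) = IZR (n0 + Z.of_nat j)).
      { apply Rmult_eq_reg_r with (PI/3); [|lra]. unfold Rdiv in *. lra. }
      apply eq_IZR in E'. lia.
    + intros t. unfold l. rewrite in_map_iff. split.
      * intros [i [Hi Hin]]. apply in_seq in Hin. subst t.
        assert (Hyi : y <= IZR (n0 + Z.of_nat i) < y + 6).
        { rewrite plus_IZR, <- INR_IZR_INZ.
          assert (INR i <= 5) by (replace 5 with (INR 5) by (simpl; ring); apply le_INR; lia).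
          pose proof (pos_INR i). lra. }
        destruct Hyi as [Hy1 Hy2].
        apply pi3_le in Hy1. apply pi3_lt in Hy2. rewrite <- Eb in Hy1.
        replace ((y + 6) * PI / 3) with (b0 + 2*PI) in Hy2 by (rewrite Eb; field).
        split; [split|].
        -- apply Rmult_le_pos; [lra|]. left; apply Rinv_0_lt_compat; lra.
        -- apply Rmult_lt_reg_r with (2*PI); [lra|]. unfold Rdiv.
           rewrite Rmult_assoc, Rinv_l by lra. lra.
        -- unfold psi. exists (n0 + Z.of_nat i)%Z. field. lra.
      * intros [[Ht0 Ht1] [n Hn]]. unfold psi in Hn.
        assert (Hy : y <= IZR n < y + 6).
        { split.
          - apply pi3_le. rewrite <- Hn, <- Eb. nra.
          - apply pi3_lt. rewrite <- Hn. replace ((y+6)*PI/3) with (b0 + 2*PI) by (rewrite Eb; field).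
            nra. }
        assert (Hr : (0 <= n - n0 <= 5)%Z) by (apply Zdiff_range; simpl; lra).
        exists (Z.to_nat (n - n0)). split.
        -- rewrite Z2Nat.id by lia. replace (n0 + (n - n0))%Z with n by ring.
           rewrite <- Hn. field. lra.
        -- apply in_seq. lia.
Qed.

Lemma floor_ex : forall y, exists n : Z, IZR n <= y < IZR n + 1.
Proof.
  intros y. destruct (archimed y) as [H1 H2]. exists (up y - 1)%Z.
  rewrite minus_IZR. simpl (IZR 1). lra.
Qed.

Lemma sin_nonneg_range : forall x, sin x >= 0 -> exists n : Z, 2*PI*IZR n <= x <= 2*PI*IZR n + PI.
Proof.
  intros x Hx. pose proof PI_RGT_0.
  destruct (floor_ex (x / (2*PI))) as [n [H1 H2]]. exists n.
  assert (A : 2*PI*IZR n <= x).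
  { apply Rmult_le_compat_l with (r := 2*PI) in H1; [|lra].
    replace (2*PI*(x/(2*PI))) with x in H1 by (field; lra). exact H1. }
  assert (B : x < 2*PI*IZR n + 2*PI).
  { apply Rmult_lt_compat_l with (r := 2*PI) in H2; [|lra].
    replace (2*PI*(x/(2*PI))) with x in H2 by (field; lra). lra. }
  split; auto. destruct (Rle_dec x (2*PI*IZR n + PI)); auto. exfalso.
  assert (sin (x - 2*PI*IZR n) < 0) by (apply sin_lt_0; lra).
  replace (x - 2*PI*IZR n) with (x + 2*PI*IZR (-n)) in H0 by (rewrite opp_IZR; ring).
  rewrite sin_2pik in H0. lra.
Qed.

Lemma sin_2pin : forall n, sin (2*PI*IZR n) = 0.
Proof. intros. replace (2*PI*IZR n) with (0 + 2*PI*IZR n) by ring. rewrite sin_2pik. apply sin_0. Qed.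

Lemma sin_2pin_pi : forall n, sin (2*PI*IZR n + PI) = 0.
Proof. intros. replace (2*PI*IZR n + PI) with (PI + 2*PI*IZR n) by ring. rewrite sin_2pik. apply sin_PI. Qed.

Lemma two_zeros : forall (b : nat -> R) J d, (2 <= J)%nat ->
  (forall j, (j < J)%nat -> 0 < b (S j) - b j <= PI) -> b J = b 0%nat + 2*PI ->
  (forall j, (j < J)%nat -> sin (b j - d) >= 0) ->
  exists i j, (i < J)%nat /\ (j < J)%nat /\ i <> j /\ sin (b i - d) = 0 /\ sin (b j - d) = 0.
Proof.
  intros b J d HJ Hg HbJ Hs. pose proof PI_RGT_0.
  destruct (sin_nonneg_range _ (Hs 0%nat ltac:(lia))) as [n0 Hn0].
  set (a := d + 2*PI*IZR n0).
  assert (Cl : forall j, (j < J)%nat -> (a <= b j <= a + PI) \/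
     exists i j, (i < J)%nat /\ (j < J)%nat /\ i <> j /\ sin (b i - d) = 0 /\ sin (b j - d) = 0).
  { induction j; intros Hj.
    - left. unfold a. lra.
    - destruct IHj as [[Hl Hu]|C]; [lia| |right; exact C].
      destruct (sin_nonneg_range _ (Hs (S j) Hj)) as [n Hn].
      specialize (Hg j ltac:(lia)).
      assert (Hk : (0 <= n - n0 <= 1)%Z).
      { apply Zdiff_range. simpl. unfold a in *. split.
        - assert (2*PI*(IZR n - IZR n0) > -PI) by lra.
          assert (IZR n - IZR n0 > -1/2).
          { apply Rmult_gt_reg_l with (2*PI); lra. } lra.
        - assert (2*PI*(IZR n - IZR n0) <= 2*PI) by lra.
          assert (IZR n - IZR n0 <= 1).
          { apply Rmult_le_reg_l with (2*PI); lra. } lra. }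
      destruct (Z.eq_dec n n0) as [E|E].
      + subst. left. unfold a. lra.
      + assert (n = n0 + 1)%Z by lia. subst n. rewrite plus_IZR in Hn. simpl (IZR 1) in Hn.
        right. exists j, (S j). split; [lia|]. split; [lia|]. split; [lia|]. split.
        * replace (b j - d) with (2*PI*IZR n0 + PI) by (unfold a in *; lra). apply sin_2pin_pi.
        * replace (b (S j) - d) with (2*PI*IZR (n0+1)) by (rewrite plus_IZR; simpl (IZR 1); unfold a in *; lra).
          apply sin_2pin. }
  destruct (Cl (J - 1)%nat ltac:(lia)) as [[Hl Hu]|C]; [|exact C].
  specialize (Hg (J-1)%nat ltac:(lia)). replace (S (J-1)) with J in Hg by lia.
  exists 0%nat, (J-1)%nat. split; [lia|]. split; [lia|]. split; [lia|]. split.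
  - replace (b 0%nat - d) with (2*PI*IZR n0) by (unfold a in *; lra). apply sin_2pin.
  - replace (b (J-1)%nat - d) with (2*PI*IZR n0 + PI) by (unfold a in *; lra). apply sin_2pin_pi.
Qed.

Lemma sin_nz : forall x, 0 < Rabs x < PI -> sin x <> 0.
Proof.
  intros x H. unfold Rabs in H. destruct Rcase_abs.
  - replace x with (- (-x)) by ring. rewrite sin_neg.
    assert (0 < sin (-x)) by (apply sin_gt_0; lra). lra.
  - assert (0 < sin x) by (apply sin_gt_0; lra). lra.
Qed.

Lemma sin_shift_pi : forall x d, sin (x - (d + PI)) = - sin (x - d).
Proof.
  intros. replace (x - (d + PI)) with ((x - d) - PI) by ring.
  rewrite sin_minus, cos_PI, sin_PI. ring.
Qed.

Lemma cr_at_tt : forall J alpha (g : R -> pt) (tt : nat -> R) j d, (j < J)%nat -> g (tt j) = circ (alpha j) ->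
  cr d (g (tt j)) = sin (beta J alpha j - d).
Proof.
  intros. rewrite H0, <- (beta_circ J alpha j H), cr_circ. reflexivity.
Qed.

Lemma LB2 : forall J alpha g n, (2 <= J)%nat ->
  sum_f_R0 (gap_angle J alpha) (J - 1) = 2 * PI ->
  (forall j, (j < J)%nat -> gap_angle J alpha j <= PI) ->
  cycle_rel J alpha g -> has_cost g n -> (6 <= n)%nat.
Proof.
  intros J alpha g n HJ Hs Hg [Hcl [tt [Htt Hinc]]] Hc. pose proof PI_RGT_0.
  assert (Hb : forall j, (j < J)%nat -> 0 < beta J alpha (S j) - beta J alpha j <= PI).
  { intros j Hj. rewrite beta_step. pose proof (gap_pos J alpha j). specialize (Hg j Hj). lra. }
  assert (HbJ := beta_J J alpha ltac:(lia) Hs).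
  assert (Ht01 : forall j, (j < J)%nat -> 0 <= tt j < 1) by (intros; apply Htt; auto).
  assert (Hinj : forall i j, (i < J)%nat -> (j < J)%nat -> i <> j -> tt i <> tt j).
  { intros i j Hi Hj Hij E. destruct (Nat.lt_total i j) as [H1|[H1|H1]]; [|lia|].
    - specialize (Hinc i j ltac:(lia)). lra.
    - specialize (Hinc j i ltac:(lia)). lra. }
  assert (Hcr : forall j d, (j < J)%nat -> cr d (g (tt j)) = sin (beta J alpha j - d)).
  { intros. apply cr_at_tt; auto. apply Htt; auto. }
  change 6%nat with (list_sum (map (fun _ : R => 2%nat) (0 :: PI/3 :: 2*PI/3 :: nil))).
  apply (LB g n Hcl Hc).
  - constructor. intros [E|[E|[]]]; lra.
    constructor. intros [E|[]]; lra. constructor. intros []. constructor.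
  - intros d [E|[E|[E|[]]]]; subst d.
    + exists 0%Z. simpl. field.
    + exists 1%Z. simpl. field.
    + exists 2%Z. simpl. field.
  - intros d e Hd He Hde. apply sin_nz.
    destruct Hd as [E|[E|[E|[]]]]; destruct He as [E'|[E'|[E'|[]]]]; subst d e;
      try (exfalso; apply Hde; reflexivity); unfold Rabs; destruct Rcase_abs; lra.
  - intros d _.
    destruct (classic (exists i, (i < J)%nat /\ sin (beta J alpha i - d) > 0)) as [[i [Hi Pi]]|NP];
    destruct (classic (exists j, (j < J)%nat /\ sin (beta J alpha j - d) < 0)) as [[j [Hj Pj]]|NN].
    + apply (W2' g d (tt i) (tt j)); auto; rewrite Hcr; auto.
    + destruct (two_zeros (beta J alpha) J d HJ Hb HbJ) as [i' [j' [Hi' [Hj' [Hij [Z1 Z2]]]]]].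
      { intros j Hj. destruct (Rlt_le_dec (sin (beta J alpha j - d)) 0); [|lra].
        exfalso; apply NN; exists j; auto. }
      apply (W2 g d (tt i') (tt j')); auto; rewrite Hcr; auto.
    + destruct (two_zeros (beta J alpha) J (d + PI) HJ Hb HbJ) as [i' [j' [Hi' [Hj' [Hij [Z1 Z2]]]]]].
      { intros i Hi. rewrite sin_shift_pi. destruct (Rle_lt_dec (sin (beta J alpha i - d)) 0); [lra|].
        exfalso; apply NP; exists i; auto. }
      rewrite sin_shift_pi in Z1, Z2.
      apply (W2 g d (tt i') (tt j')); auto; rewrite Hcr; auto; lra.
    + destruct (two_zeros (beta J alpha) J d HJ Hb HbJ) as [i' [j' [Hi' [Hj' [Hij [Z1 Z2]]]]]].
      { intros j Hj. destruct (Rlt_le_dec (sin (beta J alpha j - d)) 0); [|lra].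
        exfalso; apply NN; exists j; auto. }
      apply (W2 g d (tt i') (tt j')); auto; rewrite Hcr; auto.
Qed.

Definition pos (x : R) : R := (x + Rabs x) / 2.
Definition mn (a b : R) : R := (a + b - Rabs (a - b)) / 2.

Lemma pos_neg : forall x, x <= 0 -> pos x = 0.
Proof. intros. unfold pos, Rabs. destruct Rcase_abs; lra. Qed.
Lemma pos_pos : forall x, 0 <= x -> pos x = x.
Proof. intros. unfold pos, Rabs. destruct Rcase_abs; lra. Qed.
Lemma pos_ge : forall x, 0 <= pos x /\ x <= pos x.
Proof. intros. unfold pos, Rabs. destruct Rcase_abs; lra. Qed.
Lemma mn_le : forall a b, mn a b <= a /\ mn a b <= b /\ mn a b <= (a + b) / 2 /\ (mn a b = a \/ mn a b = b).
Proof. intros. unfold mn, Rabs. destruct Rcase_abs; lra. Qed.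

Lemma cont_pos : forall f, continuity f -> continuity (fun t => pos (f t)).
Proof.
  intros. unfold pos. unfold Rdiv. apply cont_mult; [|apply cont_const].
  apply cont_plus; auto. apply cont_comp; auto. apply Rcontinuity_abs.
Qed.
Lemma cont_mn : forall f g, continuity f -> continuity g -> continuity (fun t => mn (f t) (g t)).
Proof.
  intros. unfold mn. unfold Rdiv. apply cont_mult; [|apply cont_const].
  apply cont_minus. apply cont_plus; auto. apply cont_comp. apply cont_minus; auto.
  apply Rcontinuity_abs.
Qed.

Section Tri.
Variables m b0 M : R.
Hypothesis Hmb : m <= b0.
Hypothesis HbM : b0 <= M.
Hypothesis HmM : m < M.

Let L := M - m.
Let T1 := (M - b0) / (2 * L).
Let T2 := T1 + /2.

Definition psiT (t : R) : R := b0 + 2 * (M - m) * t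
  - 4 * (M - m) * pos (t - (M - b0) / (2 * (M - m)))
  + 4 * (M - m) * pos (t - ((M - b0) / (2 * (M - m)) + /2)).
Definition rhoT (t : R) : R :=
  1 - pos (mn (t - (M - b0) / (2 * (M - m))) ((M - b0) / (2 * (M - m)) + /2 - t)).

Lemma L_pos : 0 < L.
Proof. unfold L; lra. Qed.
Lemma T1_eq : 2 * L * T1 = M - b0.
Proof. unfold T1. field. unfold L; lra. Qed.
Lemma T1_range : 0 <= T1 <= /2.
Proof.
  pose proof L_pos. pose proof T1_eq.
  split; apply Rmult_le_reg_l with (2*L); try lra.
  replace (2 * L * /2) with L by field. unfold L in *. lra.
Qed.

Lemma psi1 : forall t, t <= T1 -> psiT t = b0 + 2 * L * t.
Proof.
  intros t Ht. pose proof T1_range. unfold psiT. fold L. fold T1. fold T2.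
  unfold T2. rewrite !pos_neg by lra. fold L. ring.
Qed.
Lemma psi2 : forall t, T1 <= t <= T2 -> psiT t = M - 2 * L * (t - T1).
Proof.
  intros t Ht. pose proof T1_eq. unfold psiT. fold L. fold T1.
  unfold T2 in *. rewrite (pos_pos (t - T1)) by lra. rewrite (pos_neg (t - (T1 + /2))) by lra.
  lra.
Qed.
Lemma psi3 : forall t, T2 <= t -> psiT t = m + 2 * L * (t - T2).
Proof.
  intros t Ht. pose proof T1_eq. pose proof T1_range. unfold psiT. fold L. fold T1.
  unfold T2 in *. rewrite (pos_pos (t - T1)) by lra. rewrite (pos_pos (t - (T1 + /2))) by lra.
  unfold L in *. lra.
Qed.
Lemma rho_out : forall t, t <= T1 \/ T2 <= t -> rhoT t = 1.
Proof.
  intros t Ht. unfold rhoT. fold L. fold T1. fold T2.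
  destruct (mn_le (t - T1) (T2 - t)) as [A [B _]].
  rewrite pos_neg; [ring|]. destruct Ht; lra.
Qed.
Lemma rho_range : forall t, 3/4 <= rhoT t <= 1.
Proof.
  intros t. unfold rhoT. fold L. fold T1. fold T2.
  destruct (mn_le (t - T1) (T2 - t)) as [A [B [C _]]].
  set (u := mn (t - T1) (T2 - t)) in *.
  destruct (Rle_dec u 0).
  - rewrite pos_neg by lra. lra.
  - rewrite pos_pos by lra. unfold T2 in C. lra.
Qed.
Lemma rho_one : forall t, T1 <= t <= T2 -> rhoT t = 1 -> t = T1 \/ t = T2.
Proof.
  intros t Ht E. unfold rhoT in E. fold L in E. fold T1 in E. fold T2 in E.
  destruct (mn_le (t - T1) (T2 - t)) as [A [B [C D]]].
  set (u := mn (t - T1) (T2 - t)) in *.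
  destruct (Rle_dec u 0).
  - destruct D; lra.
  - rewrite pos_pos in E by lra. lra.
Qed.

Lemma psi_cont : continuity psiT.
Proof.
  unfold psiT. apply cont_plus. apply cont_minus. apply cont_plus. apply cont_const.
  apply cont_mult. apply cont_const. apply cont_id.
  apply cont_mult. apply cont_const. apply cont_pos. apply cont_minus. apply cont_id. apply cont_const.
  apply cont_mult. apply cont_const. apply cont_pos. apply cont_minus. apply cont_id. apply cont_const.
Qed.
Lemma rho_cont : continuity rhoT.
Proof.
  unfold rhoT. apply cont_minus. apply cont_const. apply cont_pos. apply cont_mn.
  apply cont_minus. apply cont_id. apply cont_const.
  apply cont_minus. apply cont_const. apply cont_id.
Qed.


Lemma cmpl : forall a b, a < b <-> 2 * L * a < 2 * L * b.
Proof. pose proof L_pos. intros; split; intros; [apply Rmult_lt_compat_l; lra | apply Rmult_lt_reg_l with (2*L); lra]. Qed.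
Lemma cmple : forall a b, a <= b <-> 2 * L * a <= 2 * L * b.
Proof. pose proof L_pos. intros; split; intros; [apply Rmult_le_compat_l; lra | apply Rmult_le_reg_l with (2*L); lra]. Qed.
Lemma T2_eq : 2 * L * (1 - T2) = b0 - m.
Proof. pose proof T1_eq. unfold T2. replace (2 * L * (1 - (T1 + /2))) with (L - 2*L*T1) by field. unfold L in *; lra. Qed.
Lemma half_eq : 2 * L * /2 = L.
Proof. field. Qed.

Lemma psi_range : forall t, 0 <= t <= 1 -> m <= psiT t <= M.
Proof.
  intros t Ht. pose proof L_pos. pose proof T1_eq. pose proof T2_eq. pose proof T1_range.
  destruct (Rle_dec t T1).
  - rewrite psi1 by auto. assert (2*L*t <= 2*L*T1) by (apply (proj1 (cmple _ _)); auto).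
    assert (0 <= 2*L*t) by (apply Rmult_le_pos; lra). unfold L in *; lra.
  - destruct (Rle_dec t T2).
    + rewrite psi2 by lra. assert (2*L*(t - T1) <= 2*L*(/2)) by (apply (proj1 (cmple _ _)); unfold T2 in *; lra).
      assert (0 <= 2*L*(t-T1)) by (apply Rmult_le_pos; lra). rewrite half_eq in *. unfold L in *; lra.
    + rewrite psi3 by lra. assert (2*L*(t - T2) <= 2*L*(1 - T2)) by (apply (proj1 (cmple _ _)); lra).
      assert (0 <= 2*L*(t-T2)) by (apply Rmult_le_pos; lra). unfold L in *; lra.
Qed.

Definition solA d := if Rle_dec b0 d then if Rlt_dec d M then (d - b0) / (2 * L) :: nil else nil else nil.
Definition solB d := if Rlt_dec m d then if Rle_dec d M then (T1 + (M - d) / (2 * L)) :: nil else nil else nil.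
Definition solC d := if Rle_dec m d then if Rlt_dec d b0 then (T2 + (d - m) / (2 * L)) :: nil else nil else nil.
Definition solT d := solA d ++ solB d ++ solC d.

Lemma mul2L : forall x, 2 * L * (x / (2 * L)) = x.
Proof. pose proof L_pos. intros. field. lra. Qed.

Lemma solA_in : forall d t, In t (solA d) -> 0 <= t < T1 /\ psiT t = d.
Proof.
  intros d t H. unfold solA in H. pose proof T1_eq. pose proof L_pos.
  destruct Rle_dec; [|destruct H]. destruct Rlt_dec; [|destruct H].
  destruct H as [<-|[]]. pose proof (mul2L (d - b0)).
  assert (0 <= (d - b0) / (2 * L) < T1) by (rewrite (cmple 0), (cmpl _ T1); lra).
  split; auto. rewrite psi1 by lra. lra.
Qed.
Lemma solB_in : forall d t, In t (solB d) -> T1 <= t < T2 /\ psiT t = d.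
Proof.
  intros d t H. unfold solB in H. pose proof T1_eq. pose proof L_pos. pose proof half_eq.
  destruct Rlt_dec; [|destruct H]. destruct Rle_dec; [|destruct H].
  destruct H as [<-|[]]. pose proof (mul2L (M - d)).
  assert (0 <= (M - d) / (2 * L) < /2) by (rewrite (cmple 0), (cmpl _ (/2)); unfold L in *; lra).
  unfold T2. split; [lra|]. rewrite psi2 by (unfold T2; lra).
  replace (T1 + (M - d) / (2 * L) - T1) with ((M - d) / (2 * L)) by ring. lra.
Qed.
Lemma solC_in : forall d t, In t (solC d) -> T2 <= t < 1 /\ psiT t = d.
Proof.
  intros d t H. unfold solC in H. pose proof T2_eq. pose proof L_pos.
  destruct Rle_dec; [|destruct H]. destruct Rlt_dec; [|destruct H].
  destruct H as [<-|[]]. pose proof (mul2L (d - m)).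
  assert (0 <= (d - m) / (2 * L) < 1 - T2) by (rewrite (cmple 0), (cmpl _ (1 - T2)); lra).
  split; [lra|]. rewrite psi3 by lra.
  replace (T2 + (d - m) / (2 * L) - T2) with ((d - m) / (2 * L)) by ring. lra.
Qed.

Lemma solT_spec : forall d t, In t (solT d) <-> (0 <= t < 1 /\ psiT t = d).
Proof.
  intros d t. pose proof T1_range as R1. pose proof L_pos as R2. pose proof T1_eq as R3. pose proof T2_eq as R4.
  pose proof half_eq as R5. unfold solT. split.
  - intros H. apply in_app_or in H. destruct H as [H|H].
    + apply solA_in in H. split; [lra|tauto].
    + apply in_app_or in H. destruct H as [H|H].
      * apply solB_in in H. unfold T2 in H. split; [lra|tauto].
      * apply solC_in in H. unfold T2 in H. split; [lra|tauto].
  - intros [Ht Hp]. apply in_or_app. destruct (Rlt_dec t T1).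
    + left. rewrite psi1 in Hp by lra. subst d. unfold solA.
      assert (2*L*t < 2*L*T1) by (apply (proj1 (cmpl _ _)); auto).
      assert (0 <= 2*L*t) by (apply Rmult_le_pos; lra).
      destruct Rle_dec; [|lra]. destruct Rlt_dec; [|lra]. left. field. lra.
    + right. apply in_or_app. destruct (Rlt_dec t T2).
      * left. rewrite psi2 in Hp by lra. subst d. unfold solB.
        assert (2*L*(t - T1) < 2*L*(/2)) by (apply (proj1 (cmpl _ _)); unfold T2 in *; lra).
        assert (0 <= 2*L*(t-T1)) by (apply Rmult_le_pos; lra).
        destruct Rlt_dec; [|unfold L in *; lra]. destruct Rle_dec; [|lra]. left. field. lra.
      * right. rewrite psi3 in Hp by lra. subst d. unfold solC.
        assert (2*L*(t - T2) < 2*L*(1 - T2)) by (apply (proj1 (cmpl _ _)); lra).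
        assert (0 <= 2*L*(t-T2)) by (apply Rmult_le_pos; lra).
        destruct Rle_dec; [|lra]. destruct Rlt_dec; [|lra]. left. field. lra.
Qed.

Lemma len_le1_nodup : forall (l : list R), (length l <= 1)%nat -> NoDup l.
Proof.
  intros [|a [|b l]] H; simpl in H. constructor. constructor; [intros []|constructor]. lia.
Qed.

Lemma solT_nodup : forall d, NoDup (solT d).
Proof.
  intros d. unfold solT. pose proof T1_range.
  assert (HA : (length (solA d) <= 1)%nat) by (unfold solA; repeat destruct Rle_dec; repeat destruct Rlt_dec; simpl; lia).
  assert (HB : (length (solB d) <= 1)%nat) by (unfold solB; repeat destruct Rle_dec; repeat destruct Rlt_dec; simpl; lia).
  assert (HC : (length (solC d) <= 1)%nat) by (unfold solC; repeat destruct Rle_dec; repeat destruct Rlt_dec; simpl; lia).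
  apply NoDup_app. apply len_le1_nodup; auto.
  apply NoDup_app. apply len_le1_nodup; auto. apply len_le1_nodup; auto.
  - intros a Ha Hc. apply solB_in in Ha. apply solC_in in Hc. lra.
  - intros a Ha Hc. apply solA_in in Ha. apply in_app_or in Hc. destruct Hc as [Hc|Hc].
    apply solB_in in Hc; lra. apply solC_in in Hc. unfold T2 in Hc. lra.
Qed.

Definition cw (d : R) : nat := if Rlt_dec m d then if Rlt_dec d M then 2%nat else 1%nat else 1%nat.

Lemma solT_len : forall d, m <= d <= M -> length (solT d) = cw d.
Proof.
  intros d Hd. unfold solT, solA, solB, solC, cw.
  repeat destruct Rle_dec; repeat destruct Rlt_dec; simpl; try lra; reflexivity.
Qed.


Lemma lin_inj : forall s t, 2 * L * s = 2 * L * t -> s = t.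
Proof. pose proof L_pos. intros. apply Rmult_eq_reg_l with (2*L); lra. Qed.

Lemma piece : forall s, 0 <= s < 1 ->
  (s < T1 /\ rhoT s = 1 /\ psiT s = b0 + 2 * L * s /\ b0 <= psiT s < M) \/
  (T1 <= s < T2 /\ psiT s = M - 2 * L * (s - T1) /\ (rhoT s = 1 -> s = T1)) \/
  (T2 <= s /\ rhoT s = 1 /\ psiT s = m + 2 * L * (s - T2) /\ m <= psiT s < b0).
Proof.
  intros s Hs. pose proof L_pos. pose proof T1_eq. pose proof T2_eq. pose proof T1_range.
  destruct (Rlt_dec s T1).
  - left. rewrite psi1 by lra. rewrite rho_out by lra.
    assert (2*L*s < 2*L*T1) by (apply (proj1 (cmpl _ _)); auto).
    assert (0 <= 2*L*s) by (apply Rmult_le_pos; lra). repeat split; lra.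
  - right. destruct (Rlt_dec s T2).
    + left. rewrite psi2 by lra. split; [lra|]. split; [reflexivity|].
      intros E. destruct (rho_one s ltac:(lra) E); lra.
    + right. rewrite psi3 by lra. rewrite rho_out by lra.
      assert (2*L*(s-T2) < 2*L*(1-T2)) by (apply (proj1 (cmpl _ _)); lra).
      assert (0 <= 2*L*(s-T2)) by (apply Rmult_le_pos; lra). repeat split; lra.
Qed.

Lemma cand1 : M - m < 2 * PI -> forall ds, NoDup ds ->
  (forall d, In d ds <-> (mult3 d /\ m <= d <= M)) ->
  closed_curve_in_D (polar rhoT psiT) /\ embedded (polar rhoT psiT) /\
  winding_number (polar rhoT psiT) 0%Z /\
  has_cost (polar rhoT psiT) (list_sum (map cw ds)) /\
  (forall x, b0 <= x <= M -> polar rhoT psiT ((x - b0) / (2 * L)) = circ x) /\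
  (forall x, m <= x < b0 -> polar rhoT psiT (T2 + (x - m) / (2 * L)) = circ x).
Proof.
  intros H2pi ds Hnd Hds. pose proof L_pos. pose proof T1_eq. pose proof T2_eq. pose proof T1_range.
  assert (Hr0 : forall t, 0 < rhoT t <= 1) by (intros t; pose proof (rho_range t); lra).
  assert (P0 : psiT 0 = b0) by (rewrite psi1 by lra; ring).
  assert (P1 : psiT 1 = b0) by (rewrite psi3 by (unfold T2; lra); lra).
  assert (R0 : rhoT 0 = 1) by (apply rho_out; lra).
  assert (R1 : rhoT 1 = 1) by (apply rho_out; unfold T2; lra).
  split; [|split; [|split; [|split; [|split]]]].
  - apply polar_closed. apply rho_cont. apply psi_cont. intros; apply Hr0.
    unfold polar. rewrite P0, P1, R0, R1. reflexivity.
  - apply polar_embedded.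
    + intros; apply Hr0.
    + intros s t Hs Ht Er Ep.
      destruct (piece s Hs) as [[A1 [A2 [A3 A4]]]|[[A1 [A2 A3]]|[A1 [A2 [A3 A4]]]]];
      destruct (piece t Ht) as [[B1 [B2 [B3 B4]]]|[[B1 [B2 B3]]|[B1 [B2 [B3 B4]]]]].
      * apply lin_inj. lra.
      * assert (t = T1) by (apply B3; lra). subst t. lra.
      * lra.
      * assert (s = T1) by (apply A3; lra). subst s. lra.
      * assert (2 * L * (s - T1) = 2 * L * (t - T1)) by lra. apply lin_inj in H3. lra.
      * assert (s = T1) by (apply A3; lra). subst s. lra.
      * lra.
      * assert (t = T1) by (apply B3; lra). subst t. lra.
      * assert (2 * L * (s - T2) = 2 * L * (t - T2)) by lra. apply lin_inj in H3. lra.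
    + intros s t Hs Ht. pose proof (psi_range s ltac:(lra)). pose proof (psi_range t ltac:(lra)).
      unfold Rabs; destruct Rcase_abs; lra.
  - apply polar_winding. apply psi_cont. intros; apply Hr0. rewrite P0, P1. simpl. ring.
  - assert (E : list_sum (map cw ds) = length (flat_map solT ds)).
    { assert (Hin : forall d, In d ds -> m <= d <= M) by (intros d Hd; apply Hds in Hd; tauto).
      clear Hnd Hds. induction ds as [|d ds IH]; [reflexivity|].
      simpl. rewrite length_app, IH by (intros; apply Hin; simpl; auto).
      rewrite solT_len by (apply Hin; simpl; auto). reflexivity. }
    rewrite E. apply polar_cost.
    + intros; apply Hr0.
    + assert (Hin : forall d, In d ds -> m <= d <= M) by (intros d Hd; apply Hds in Hd; tauto).
      clear Hds E. induction ds as [|d ds IH]; [constructor|].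
      inversion Hnd; subst. simpl. apply NoDup_app.
      * apply solT_nodup.
      * apply IH; auto. intros; apply Hin; simpl; auto.
      * intros t Ht Ht'. apply solT_spec in Ht. apply in_flat_map in Ht'.
        destruct Ht' as [e [He Hte]]. apply solT_spec in Hte.
        assert (d = e) by lra. subst. contradiction.
    + intros t. rewrite in_flat_map. split.
      * intros [d [Hd Ht]]. apply solT_spec in Ht. apply Hds in Hd.
        destruct Ht as [Ht Hp]. split; auto. rewrite Hp. tauto.
      * intros [Ht Hm]. exists (psiT t). split.
        -- apply Hds. split; auto. apply psi_range. lra.
        -- apply solT_spec. auto.
  - intros x Hx. assert (Ht : 2 * L * ((x - b0) / (2 * L)) = x - b0) by (field; lra).
    assert ((x - b0) / (2 * L) <= T1) by (apply (proj2 (cmple _ _)); lra).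
    unfold polar, circ. rewrite psi1 by auto. rewrite rho_out by auto.
    rewrite Ht. replace (b0 + (x - b0)) with x by ring. rewrite !Rmult_1_l. reflexivity.
  - intros x Hx. assert (Ht : 2 * L * ((x - m) / (2 * L)) = x - m) by (field; lra).
    assert (0 <= (x - m) / (2 * L)) by (apply (proj2 (cmple _ _)); lra).
    unfold polar, circ. rewrite psi3 by lra. rewrite rho_out by lra.
    replace (T2 + (x - m) / (2 * L) - T2) with ((x - m) / (2 * L)) by ring.
    rewrite Ht. replace (m + (x - m)) with x by ring. rewrite !Rmult_1_l. reflexivity.
Qed.

End Tri.

Lemma pi3_le_r : forall u b, u * PI / 3 <= b <-> u <= 3 * b / PI.
Proof.
  intros. pose proof PI_RGT_0. replace b with ((3 * b / PI) * PI / 3) at 1 by (field; lra).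
  apply pi3_le.
Qed.
Lemma pi3_le_l : forall u a, a <= u * PI / 3 <-> 3 * a / PI <= u.
Proof.
  intros. pose proof PI_RGT_0. replace a with ((3 * a / PI) * PI / 3) at 1 by (field; lra).
  apply pi3_le.
Qed.

Lemma mults_list : forall a b, exists ds, NoDup ds /\
  forall d, In d ds <-> (mult3 d /\ a <= d <= b).
Proof.
  intros a b. pose proof PI_RGT_0.
  destruct (floor_ex (3 * a / PI)) as [n0 Hn0].
  destruct (floor_ex (3 * b / PI)) as [n1 Hn1].
  set (zs := map (fun i : nat => (n0 + Z.of_nat i)%Z) (seq 0 (Z.to_nat (n1 - n0 + 1)))).
  set (f := fun z : Z => if Rle_dec a (IZR z * PI / 3) then true else false).
  exists (map (fun z => IZR z * PI / 3) (filter f zs)). split.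
  - apply NoDup_map_NoDup_ForallPairs.
    + intros x y _ _ E. apply eq_IZR. apply Rmult_eq_reg_r with (PI/3); [|lra].
      unfold Rdiv in *. lra.
    + apply NoDup_filter. unfold zs. apply NoDup_map_NoDup_ForallPairs; [|apply seq_NoDup].
      intros x y _ _ E. lia.
  - intros d. rewrite in_map_iff. split.
    + intros [z [Hz Hin]]. apply filter_In in Hin. destruct Hin as [Hin Hf].
      unfold f in Hf. destruct Rle_dec as [Ha|]; [|discriminate].
      unfold zs in Hin. apply in_map_iff in Hin. destruct Hin as [i [Hi Hi']].
      apply in_seq in Hi'. subst d. split; [exists z; reflexivity|]. split; auto.
      assert (IZR z <= IZR n1) by (apply IZR_le; lia).
      apply pi3_le_r. lra.
    + intros [[z Hz] [Ha Hb]]. exists z. split; auto.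
      apply filter_In. split.
      * unfold zs. apply in_map_iff. exists (Z.to_nat (z - n0)).
        rewrite Hz in Ha, Hb. apply pi3_le_l in Ha. apply pi3_le_r in Hb.
        assert (IZR n0 < IZR z + 1) by lra. assert (IZR z < IZR n1 + 1) by lra.
        rewrite <- plus_IZR in H0, H1. apply lt_IZR in H0. apply lt_IZR in H1.
        split. lia. apply in_seq. lia.
      * unfold f. destruct Rle_dec; auto. rewrite <- Hz in n. contradiction.
Qed.

Lemma eps_ex : forall m, exists e, 0 < e <= PI / 6 /\
  forall d, mult3 d -> m <= d <= m + e -> d = m.
Proof.
  intros m. pose proof PI_RGT_0.
  destruct (floor_ex (3 * m / PI)) as [n Hn].
  assert (Em : m = (3 * m / PI) * PI / 3) by (field; lra).
  set (nx := (IZR n + 1) * PI / 3).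
  assert (Hnx : m < nx /\ nx - m <= PI / 3).
  { assert (E : nx - m = (IZR n + 1 - 3 * m / PI) * (PI / 3)) by (unfold nx; field; lra).
    split.
    - assert (0 < (IZR n + 1 - 3 * m / PI) * (PI / 3)) by (apply Rmult_lt_0_compat; lra). lra.
    - rewrite E. replace (PI / 3) with (1 * (PI / 3)) at 2 by ring.
      apply Rmult_le_compat_r; lra. }
  exists ((nx - m) / 2). split; [lra|].
  intros d [z Hz] Hd. destruct (Req_dec d m); auto. exfalso.
  assert (Hmd : m < d) by lra. subst d.
  assert (Hz1 : 3 * m / PI < IZR z).
  { apply Rmult_lt_reg_r with (PI / 3); [lra|]. replace (3 * m / PI * (PI / 3)) with m by (field; lra).
    unfold Rdiv in *. lra. }
  assert (Hz2 : IZR n < IZR z) by lra. apply lt_IZR in Hz2.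
  assert (Hz3 : IZR (n + 1) <= IZR z) by (apply IZR_le; lia). rewrite plus_IZR in Hz3.
  assert (nx <= IZR z * PI / 3) by (apply pi3_le; auto). lra.
Qed.

Lemma cyc1 : forall J alpha j0 m b0 M' (g : R -> pt), (1 <= J)%nat -> (j0 < J)%nat ->
  sum_f_R0 (gap_angle J alpha) (J - 1) = 2 * PI ->
  m = beta J alpha (S j0) - 2 * PI -> b0 = alpha 0%nat ->
  beta J alpha j0 <= M' -> m < M' ->
  closed_curve_in_D g ->
  (forall x, b0 <= x <= M' -> g ((x - b0) / (2 * (M' - m))) = circ x) ->
  (forall x, m <= x < b0 -> g ((M' - b0) / (2 * (M' - m)) + /2 + (x - m) / (2 * (M' - m))) = circ x) ->
  cycle_rel J alpha g.
Proof.
  intros J alpha j0 m b0 M' g HJ Hj0 Hs Hm Hb0 HM Hlt Hcl G1 G2.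
  pose proof (beta_J J alpha HJ Hs) as BJ. pose proof PI_RGT_0.
  assert (B0 : beta J alpha 0 = b0) by (subst; reflexivity).
  assert (Hmb : m <= b0).
  { pose proof (beta_le J alpha (S j0) J ltac:(lia)). subst. lra. }
  assert (Hb0M : b0 <= beta J alpha j0) by (rewrite <- B0; apply beta_le; lia).
  set (L := M' - m). assert (HL : 0 < L) by (unfold L; lra).
  set (T1 := (M' - b0) / (2 * L)).
  assert (E1 : 2 * L * T1 = M' - b0) by (unfold T1; field; lra).
  assert (D : forall x, 2 * L * (x / (2 * L)) = x) by (intros; field; lra).
  assert (cl : forall u v, 2 * L * u < 2 * L * v -> u < v) by (intros; apply Rmult_lt_reg_l with (2*L); lra).
  assert (cle : forall u v, 2 * L * u <= 2 * L * v -> u <= v) by (intros; apply Rmult_le_reg_l with (2*L); lra).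
  assert (Mul : forall u v, u * v = 2 * L * (u * v / (2 * L))) by (intros; field; lra).
  assert (T1r : 0 <= T1 <= /2).
  { split; apply cle; rewrite E1; [|replace (2 * L * /2) with L by field; unfold L]; lra. }
  split; auto.
  exists (fun j => if le_dec j j0 then (beta J alpha j - b0) / (2 * L)
                   else T1 + /2 + (beta J alpha j - 2 * PI - m) / (2 * L)).
  assert (P1 : forall j, (j <= j0)%nat -> 0 <= (beta J alpha j - b0) / (2 * L) <= T1).
  { intros j Hj. pose proof (D (beta J alpha j - b0)).
    assert (b0 <= beta J alpha j) by (rewrite <- B0; apply beta_le; lia).
    assert (beta J alpha j <= beta J alpha j0) by (apply beta_le; lia).
    split; apply cle; lra. }
  assert (P2 : forall j, (j0 < j < J)%nat -> 0 <= (beta J alpha j - 2 * PI - m) / (2 * L) < /2 - T1).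
  { intros j Hj. pose proof (D (beta J alpha j - 2 * PI - m)).
    assert (beta J alpha (S j0) <= beta J alpha j) by (apply beta_le; lia).
    assert (beta J alpha j < beta J alpha J) by (apply beta_incr; lia).
    assert (2 * L * (/2 - T1) = b0 - m) by (replace (2 * L * (/2 - T1)) with (L - 2 * L * T1) by field; rewrite E1; unfold L; lra).
    split; [apply cle|apply cl]; lra. }
  split.
  - intros j Hj. destruct le_dec as [Hle|Hgt].
    + specialize (P1 j Hle). split; [lra|].
      assert (b0 <= beta J alpha j) by (rewrite <- B0; apply beta_le; lia).
      assert (beta J alpha j <= beta J alpha j0) by (apply beta_le; lia).
      unfold L. rewrite G1 by lra. apply beta_circ; auto.
    + specialize (P2 j ltac:(lia)). split; [lra|].
      assert (beta J alpha (S j0) <= beta J alpha j) by (apply beta_le; lia).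
      assert (beta J alpha j < beta J alpha J) by (apply beta_incr; lia).
      unfold L. unfold T1, L in *. rewrite G2 by lra.
      replace (beta J alpha j - 2 * PI) with (beta J alpha j + 2 * PI * IZR (-1)) by (simpl; ring).
      rewrite circ_2pik. apply beta_circ; auto.
  - intros i j Hij. destruct (le_dec i j0) as [Hi|Hi]; destruct (le_dec j j0) as [Hj|Hj].
    + apply cl. rewrite !D. pose proof (beta_incr J alpha i j ltac:(lia)). lra.
    + specialize (P1 i Hi). specialize (P2 j ltac:(lia)). lra.
    + lia.
    + apply Rplus_lt_compat_l. apply cl. rewrite !D. pose proof (beta_incr J alpha i j ltac:(lia)). lra.
Qed.

Lemma LB1 : forall J alpha j0 m Mr M' ds (g : R -> pt) n, (1 <= J)%nat -> (j0 < J)%nat ->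
  Mr = beta J alpha j0 -> circ (alpha (S j0 mod J)%nat) = circ m ->
  m <= Mr -> Mr - m < PI -> Mr <= M' -> (M' = Mr \/ Mr = m) ->
  NoDup ds -> (forall d, In d ds <-> (mult3 d /\ m <= d <= Mr)) ->
  cycle_rel J alpha g -> has_cost g n -> (list_sum (map (cw m M') ds) <= n)%nat.
Proof.
  intros J alpha j0 m Mr M' ds g n HJ Hj0 HMr Hcm Hle Hpi HMM' HM Hnd Hds [Hcl [tt [Htt Hinc]]] Hc.
  assert (Hi1 : (S j0 mod J < J)%nat) by (apply Nat.mod_upper_bound; lia).
  assert (A : forall d, cr d (g (tt j0)) = sin (Mr - d)).
  { intros d. rewrite (proj2 (Htt j0 Hj0)), <- (beta_circ J alpha j0 Hj0), cr_circ, HMr. reflexivity. }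
  assert (B : forall d, cr d (g (tt (S j0 mod J)%nat)) = sin (m - d)).
  { intros d. rewrite (proj2 (Htt _ Hi1)), Hcm, cr_circ. reflexivity. }
  assert (T0 : 0 <= tt j0 < 1) by (apply Htt; auto).
  assert (T1 : 0 <= tt (S j0 mod J)%nat < 1) by (apply Htt; auto).
  apply (LB g n Hcl Hc); auto.
  - intros d Hd. apply Hds in Hd. tauto.
  - intros d e Hd He Hde. apply Hds in Hd. apply Hds in He. apply sin_nz.
    destruct (Req_dec d e); [contradiction|]. unfold Rabs; destruct Rcase_abs; lra.
  - intros d Hd. apply Hds in Hd. destruct Hd as [_ [Hd1 Hd2]]. unfold cw.
    destruct (Rlt_dec m d) as [H1|H1]; [destruct (Rlt_dec d M') as [H2|H2]|].
    + assert (d < Mr) by (destruct HM; lra).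
      apply (W2' g d (tt j0) (tt (S j0 mod J)%nat)); auto.
      * rewrite A. apply Rlt_gt, sin_gt_0; lra.
      * rewrite B. replace (m - d) with (- (d - m)) by ring. rewrite sin_neg.
        assert (0 < sin (d - m)) by (apply sin_gt_0; lra). lra.
    + assert (d = Mr) by lra. subst d.
      apply (W1 g Mr (tt j0)); auto. rewrite A. replace (Mr - Mr) with 0 by ring. apply sin_0.
    + assert (d = m) by lra. subst d.
      apply (W1 g m (tt (S j0 mod J)%nat)); auto. rewrite B. replace (m - m) with 0 by ring. apply sin_0.
Qed.

Theorem mainTheorem8 (J : nat) (alpha : nat -> R)
  (HJ : (1 <= J)%nat)
  (Hdist : distinct_points J alpha)
  (Hsum : sum_f_R0 (gap_angle J alpha) (J - 1) = 2 * PI) :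
  ((exists j, (j < J)%nat /\ gap_angle J alpha j > PI) ->
     exists g, Wd_minimizing J alpha g /\ embedded g /\
               monotone_cycle_rel J alpha g /\ winding_number g 0%Z) /\
  ((forall j, (j < J)%nat -> gap_angle J alpha j <= PI) ->
     exists g, Wd_minimizing J alpha g /\ embedded g /\
               (winding_number g 1%Z \/ winding_number g (-1)%Z)).
Proof.
  pose proof PI_RGT_0 as Hpi. split.
  - intros [j0 [Hj0 Hgap]].
    set (m := beta J alpha (S j0) - 2 * PI). set (Mr := beta J alpha j0). set (b0 := alpha 0%nat).
    pose proof (beta_J J alpha HJ Hsum) as BJ.
    assert (Hga : gap_angle J alpha j0 = beta J alpha (S j0) - Mr) by (unfold Mr; rewrite beta_step; ring).
    pose proof (gap_le J alpha j0) as Hgle.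
    assert (HmMr : m <= Mr) by (unfold m; lra).
    assert (HMrpi : Mr - m < PI) by (unfold m; lra).
    assert (Hmb : m <= b0).
    { unfold m, b0. pose proof (beta_le J alpha (S j0) J ltac:(lia)). simpl beta in BJ. lra. }
    assert (Hb0Mr : b0 <= Mr) by (unfold b0, Mr; apply (beta_le J alpha 0 j0); lia).
    assert (Hcm : circ (alpha (S j0 mod J)%nat) = circ m).
    { destruct (Nat.eq_dec (S j0) J) as [E|E].
      - rewrite E, Nat.mod_same by lia. unfold m. rewrite E, BJ. simpl beta. f_equal; f_equal; ring.
      - rewrite Nat.mod_small by lia. rewrite <- (beta_circ J alpha (S j0)) by lia.
        unfold m. replace (beta J alpha (S j0) - 2 * PI) with (beta J alpha (S j0) + 2 * PI * IZR (-1))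
          by (simpl; ring). rewrite circ_2pik. reflexivity. }
    assert (Ex : exists M' ds, Mr <= M' /\ m < M' /\ M' - m < 2 * PI /\ (M' = Mr \/ Mr = m) /\
              NoDup ds /\ (forall d, In d ds <-> (mult3 d /\ m <= d <= Mr)) /\
              (forall d, In d ds <-> (mult3 d /\ m <= d <= M'))).
    { destruct (mults_list m Mr) as [ds [Hnd Hds]].
      destruct (Nat.eq_dec J 1) as [E1|E1].
      - assert (Mr = m).
        { subst J. assert (j0 = 0%nat) by lia. subst j0. unfold Mr, m. rewrite BJ. simpl. ring. }
        destruct (eps_ex m) as [e [He Hee]].
        exists (m + e), ds. split; [lra|]. split; [lra|]. split; [lra|]. split; [right; auto|].
        split; auto. split; auto. intros d. rewrite Hds. split.
        + intros [A B]. split; auto. lra.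
        + intros [A B]. split; auto. assert (d = m) by (apply Hee; auto). lra.
      - assert (gap_angle J alpha j0 < 2 * PI) by (apply gap_lt; auto; lia).
        exists Mr, ds. split; [lra|]. split; [unfold m in *; lra|]. split; [lra|].
        split; [left; reflexivity|]. auto. }
    destruct Ex as [M' [ds [H1 [H2 [H3 [H4 [Hnd [Hds1 Hds2]]]]]]]].
    destruct (cand1 m b0 M' Hmb ltac:(lra) H2 H3 ds Hnd Hds2) as [Gcl [Gemb [Gw [Gc [G1 G2]]]]].
    assert (Hcyc : cycle_rel J alpha (polar (rhoT m b0 M') (psiT m b0 M'))).
    { apply (cyc1 J alpha j0 m b0 M'); auto. }
    exists (polar (rhoT m b0 M') (psiT m b0 M')). split; [|split; [|split]]; auto.
    + split; auto. exists (list_sum (map (cw m M') ds)). split; auto.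
      intros g' n' Hc' Hn'. apply (LB1 J alpha j0 m Mr M' ds g' n'); auto.
    + split; auto. apply cyclic_order; auto.
  - intros Hall.
    assert (HJ2 : (2 <= J)%nat).
    { destruct (Nat.eq_dec J 1) as [E|E]; [|lia]. exfalso. subst J. simpl in Hsum.
      specialize (Hall 0%nat ltac:(lia)). lra. }
    destruct (cand2 J alpha HJ2 Hsum) as [g [Hcl [Hcyc [Hemb [Hw Hc]]]]].
    exists g. split; [|split]; auto.
    split; auto. exists 6%nat. split; auto. intros g' n' Hc' Hn'.
    apply (LB2 J alpha g' n'); auto.
Qed.
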